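(* Let $\mu$ be a probability distribution on $Q_d$ such that $\mu(X)\ge\mu(Y)$ whenever $X\subseteq Y$. Then $(\mathbf 0,\mathbf 0)$ is an equilibrium. Similarly, if $\mu(X)\le\mu(Y)$ whenever $X\subseteq Y$, then $(\mathbf 1,\mathbf 1)$ is an equilibrium.
   Context: $Q_d=\{0,1\}^d$ with the Hamming distance $d(X,Y)=|\{i: x_i\neq y_i\}|$; for $X,Y\in Q_d$, $X\subseteq Y$ means $x_i\le y_i$ for all $i$. A probability distribution on $Q_d$ is a function $\mu:Q_d\to\mathbb R_{\ge0}$ with $\sum_{V\in Q_d}\mu(V)=1$, extended to subsets by $\mu(\mathcal A)=\sum_{V\in\mathcal A}\mu(V)$. For $A,B\in Q_d$ let $V(A,B)=\{X\in Q_d: d(X,A)<d(X,B)\}$ and $T(A,B)=\{X\in Q_d: d(X,A)=d(X,B)\}$. Payoffs: $P_1(A,B)=\mu(V(A,B))+\frac12\mu(T(A,B))$, $P_2(A,B)=\mu(V(B,A))+\frac12\mu(T(A,B))$. $(A,B)$ is an equilibrium if $P_1(A,B)\ge P_1(A',B)$ for all $A'$ and $P_2(A,B)\ge P_2(A,B')$ for all $B'$. $\mathbf 0=(0,\dots,0)$, $\mathbf 1=(1,\dots,1)$. *)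

(* Defs.v *)
From mathcomp Require Import all_boot all_order all_algebra.
Set Implicit Arguments. Unset Strict Implicit. Unset Printing Implicit Defensive.
Import Order.TTheory GRing.Theory Num.Theory.
Local Open Scope ring_scope.

Definition cube (d : nat) := {ffun 'I_d -> bool}.

Definition hamming (d : nat) (X Y : cube d) : nat := #|[set i | X i != Y i]|.

Definition subcube (d : nat) (X Y : cube d) : bool := [forall i, X i ==> Y i].

Definition is_distribution (R : realFieldType) (d : nat) (mu : cube d -> R) : Prop :=
  (forall V, 0 <= mu V) /\ \sum_(V : cube d) mu V = 1.

Definition muV (R : realFieldType) (d : nat) (mu : cube d -> R) (A B : cube d) : R :=
  \sum_(X : cube d | (hamming X A < hamming X B)%N) mu X.
Definition muT (R : realFieldType) (d : nat) (mu : cube d -> R) (A B : cube d) : R :=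
  \sum_(X : cube d | hamming X A == hamming X B) mu X.

Definition P1 (R : realFieldType) (d : nat) (mu : cube d -> R) (A B : cube d) : R :=
  muV mu A B + muT mu A B / 2.
Definition P2 (R : realFieldType) (d : nat) (mu : cube d -> R) (A B : cube d) : R :=
  muV mu B A + muT mu A B / 2.

Definition equilibrium (R : realFieldType) (d : nat) (mu : cube d -> R) (A B : cube d) : Prop :=
  (forall A', P1 mu A' B <= P1 mu A B) /\ (forall B', P2 mu A B' <= P2 mu A B).

Definition cube0 (d : nat) : cube d := [ffun _ => false].
Definition cube1 (d : nat) : cube d := [ffun _ => true].

(* Main.v *)
Require Import Defs.
From mathcomp Require Import all_boot all_order all_algebra.
From mathcomp Require Import zify ring lra.
Set Implicit Arguments. Unset Strict Implicit. Unset Printing Implicit Defensive.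
Import Order.TTheory GRing.Theory Num.Theory.
Local Open Scope ring_scope.

Lemma card_sumb (d : nat) (P : pred 'I_d) :
  #|[set i | P i]| = (\sum_i (P i : nat))%N.
Proof. rewrite -sum1dep_card big_mkcond /=; apply: eq_bigr => i _; by case: (P i). Qed.

Definition cnt (d : nat) (A X : cube d) : nat := (\sum_i (A i && X i : nat))%N.
Definition sz (d : nat) (A : cube d) : nat := (\sum_i (A i : nat))%N.

Lemma ham_cnt d (X A : cube d) :
  (hamming X A + 2 * cnt A X = hamming X (cube0 d) + sz A)%N.
Proof.
rewrite /hamming /cnt /sz !card_sumb big_distrr /= -!big_split /=.
apply: eq_bigr => i _; rewrite ffunE; by case: (X i); case: (A i).
Qed.

Lemma cnt_le d (A X : cube d) : (cnt A X <= sz A)%N.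
Proof. apply: leq_sum => i _; by case: (A i); case: (X i). Qed.

Definition decr (R : realFieldType) d (f : cube d -> R) :=
  forall X Y, subcube X Y -> f Y <= f X.

Definition Sge (R : realFieldType) d (f : cube d -> R) A k :=
  \sum_X (if (k <= cnt A X)%N then f X else 0).
Definition Sle (R : realFieldType) d (f : cube d -> R) A j :=
  \sum_X (if (cnt A X <= j)%N then f X else 0).

Definition upd d (X : cube d) i b : cube d := [ffun t => if t == i then b else X t].

Lemma upd_id d (X : cube d) i : upd X i (X i) = X.
Proof. apply/ffunP => t; rewrite ffunE; by case: eqP => // ->. Qed.

Lemma upd_upd d (X : cube d) i b c : upd (upd X i b) i c = upd X i c.
Proof. apply/ffunP => t; rewrite !ffunE; by case: eqP. Qed.

Lemma doubling (R : realFieldType) d (h : cube d -> R) i :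
  2 * \sum_X h X = \sum_X (h (upd X i false) + h (upd X i true)).
Proof.
pose fl X := upd X i (~~ X i).
have flK : involutive fl.
  move=> X; rewrite /fl upd_upd ffunE eqxx negbK upd_id //.
have e : \sum_X h X = \sum_X h (fl X).
  by rewrite (reindex_inj (inv_inj flK)).
rewrite mulr2n mulrDl mul1r {2}e -big_split /=.
apply: eq_bigr => X _; rewrite /fl.
case E: (X i) => /=.
- by rewrite -{1}E upd_id addrC.
- by rewrite -{1}E upd_id.
Qed.
Lemma core (R : realFieldType) d n : forall (A : cube d) (f : cube d -> R) j k,
  sz A = n -> decr f -> (j + k = n)%N -> (j <= k)%N -> Sge f A k <= Sle f A j.
Proof.
elim: n => [|n IH] A f j k szA df hjk hjle.
  have -> : j = 0%N by lia. have -> : k = 0%N by lia.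
  rewrite /Sge /Sle; apply: ler_sum => X _.
  by have := cnt_le A X; rewrite szA leqn0 => /eqP ->.
have [i Ai] : exists i, A i.
  apply/existsP; case: (boolP [exists x, A x]) => // /existsPn H; move: szA.
  rewrite /sz big1 // => t _; by rewrite (negbTE (H t)).
pose A0 : cube d := [ffun t => A t && (t != i)].
have szA0 : sz A0 = n.
  move: szA; rewrite /sz (bigD1 i) //= Ai (bigD1 i (isT : true)) /= ffunE eqxx andbF.
  move=> [] <-; congr (_ + _)%N; apply: eq_bigr => t /negbTE ti.
  by rewrite ffunE ti andbT.
have cntU : forall X b, cnt A (upd X i b) = (cnt A0 X + b)%N.
  move=> X b; rewrite /cnt (bigD1 i) //= (bigD1 i (isT : true)) /= !ffunE eqxx andbF Ai /=.
  rewrite addnC; congr (_ + _)%N; apply: eq_bigr => t /negbTE ti.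
  by rewrite !ffunE ti andbT.
pose f0 X := f (upd X i false). pose f1 X := f (upd X i true).
have updS : forall X Y b c, subcube X Y -> (b ==> c) -> subcube (upd X i b) (upd Y i c).
  move=> X Y b c /forallP H bc; apply/forallP => t; rewrite !ffunE.
  by case: eqP => // _; apply: H.
have df0 : decr f0 by move=> X Y H; apply: df; apply: updS.
have df1 : decr f1 by move=> X Y H; apply: df; apply: updS.
have f10 : forall X, f1 X <= f0 X.
  move=> X; apply: df; apply: updS => //; apply/forallP => t; by rewrite implybb.
have EGe : forall k, (0 < k)%N -> 2 * Sge f A k = Sge f0 A0 k + Sge f1 A0 k.-1.
  move=> k' k0; rewrite /Sge (doubling _ i) -big_split /=; apply: eq_bigr => X _.
  rewrite !cntU /f0 /f1 addn0; congr (_ + _); congr (if _ then _ else _); lia.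
have ELe : forall j, 2 * Sle f A j = Sle f0 A0 j +
     \sum_X (if (cnt A0 X < j)%N then f1 X else 0).
  move=> j'; rewrite /Sle (doubling _ i) -big_split /=; apply: eq_bigr => X _.
  rewrite !cntU /f0 /f1 addn0 addn1 //.
have strict : forall j k, (j + k = n.+1)%N -> (j < k)%N -> Sge f A k <= Sle f A j.
  move=> j' k' e lt.
  suff : 2 * Sge f A k' <= 2 * Sle f A j' by rewrite ler_pM2l.
  rewrite EGe ?ELe; last by lia.
  case: j' e lt => [|j'] e lt.
  - have -> : Sge f0 A0 k' = 0.
      rewrite /Sge big1 // => X _; have := cnt_le A0 X; rewrite szA0.
      case: ifP => //; lia.
    have -> : \sum_X (if (cnt A0 X < 0)%N then f1 X else 0) = 0.
      by rewrite big1.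
    rewrite add0r addr0.
    apply: le_trans (IH A0 f1 0%N k'.-1 szA0 df1 _ _) _; try lia.
    rewrite /Sle; apply: ler_sum => X _; case: ifP => // _; exact: f10.
  - have h1 := IH A0 f0 j' k' szA0 df0 ltac:(lia) ltac:(lia).
    have h2 := IH A0 f1 j'.+1 k'.-1 szA0 df1 ltac:(lia) ltac:(lia).
    apply: le_trans (lerD h1 h2) _.
    rewrite /Sle -!big_split /=; apply: ler_sum => X _.
    have [h|[h|h]] : (cnt A0 X <= j')%N \/ cnt A0 X = j'.+1 \/ (j'.+1 < cnt A0 X)%N by lia.
    + by rewrite h (leqW h) ltnS h.
    + by rewrite h ltnn leqnn ltnn add0r addr0 f10.
    + have -> : (cnt A0 X <= j')%N = false by lia.
      have -> : (cnt A0 X <= j'.+1)%N = false by lia.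
      by have -> : (cnt A0 X < j'.+1)%N = false by lia.
case: (ltngtP j k) => [lt | gt | eq]; first exact: strict.
  lia.
subst j.
have k0 : (0 < k)%N by lia.
have e1 : Sge f A k = Sge f A k.+1 + \sum_X (if cnt A X == k then f X else 0).
  rewrite /Sge -big_split /=; apply: eq_bigr => X _.
  have [h|[h|h]] : (cnt A X < k)%N \/ cnt A X = k \/ (k < cnt A X)%N by lia.
  - have -> : (k <= cnt A X)%N = false by lia.
    have -> : (k.+1 <= cnt A X)%N = false by lia.
    have -> : (cnt A X == k) = false by lia. by rewrite addr0.
  - by rewrite h leqnn ltnn eqxx add0r.
  - have -> : (k <= cnt A X)%N by lia.
    have -> : (k.+1 <= cnt A X)%N by lia.
    have -> : (cnt A X == k) = false by lia. by rewrite addr0.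
have e2 : Sle f A k = Sle f A k.-1 + \sum_X (if cnt A X == k then f X else 0).
  rewrite /Sle -big_split /=; apply: eq_bigr => X _.
  have [h|[h|h]] : (cnt A X < k)%N \/ cnt A X = k \/ (k < cnt A X)%N by lia.
  - have -> : (cnt A X <= k)%N by lia.
    have -> : (cnt A X <= k.-1)%N by lia.
    have -> : (cnt A X == k) = false by lia. by rewrite addr0.
  - rewrite h leqnn eqxx; have -> : (k <= k.-1)%N = false by lia. by rewrite add0r.
  - have -> : (cnt A X <= k)%N = false by lia.
    have -> : (cnt A X <= k.-1)%N = false by lia.
    have -> : (cnt A X == k) = false by lia. by rewrite addr0.
rewrite e1 e2 lerD2r; apply: strict; lia.
Qed.
Lemma key (R : realFieldType) d (f : cube d -> R) (A : cube d) :
  decr f -> muV f A (cube0 d) <= muV f (cube0 d) A.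
Proof.
move=> df; rewrite /muV.
have [n0|npos] := posnP (sz A).
  rewrite !big1 // => X H; exfalso; move: H;
  have := ham_cnt X A; have := cnt_le A X; lia.
pose j := ((sz A).-1 %/ 2)%N. pose k := (sz A - j)%N.
have H := @core R d (sz A) A f j k (erefl _) df; rewrite /j /k in H.
have {}H := H ltac:(lia) ltac:(lia).
rewrite /Sge /Sle -!big_mkcond in H.
apply: le_trans (le_trans _ H) _; rewrite le_eqVlt; apply/orP; left; apply/eqP; apply: eq_bigl => X;
  have := ham_cnt X A; lia.
Qed.

Lemma partition (R : realFieldType) d (f : cube d -> R) (A B : cube d) :
  muV f A B + muV f B A + muT f A B = \sum_X f X.
Proof.
rewrite /muV /muT (big_mkcond (fun X => (hamming X A < hamming X B)%N)) (big_mkcond (fun X => (hamming X B < hamming X A)%N)) (big_mkcond (fun X => hamming X A == hamming X B)) -!big_split /=; apply: eq_bigr => X _.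
case: (ltngtP (hamming X A) (hamming X B)) => _; rewrite ?addr0 ?add0r //.
Qed.

Lemma muT_sym (R : realFieldType) d (f : cube d -> R) (A B : cube d) :
  muT f A B = muT f B A.
Proof. by apply: eq_bigl => X; rewrite eq_sym. Qed.

Definition cmp d (X : cube d) : cube d := [ffun i => ~~ X i].
Lemma cmpK d : involutive (@cmp d).
Proof. move=> X; apply/ffunP => i; by rewrite !ffunE negbK. Qed.

Lemma ham_cmp d (X A : cube d) : hamming (cmp X) A = hamming X (cmp A).
Proof. rewrite /hamming !card_sumb; apply: eq_bigr => i _; rewrite !ffunE.
by case: (X i); case: (A i). Qed.

Lemma muV_cmp (R : realFieldType) d (f : cube d -> R) (A B : cube d) :
  muV f A B = muV (fun X => f (cmp X)) (cmp A) (cmp B).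
Proof. by rewrite /muV (reindex_inj (inv_inj (@cmpK d))) /=; apply: eq_bigl => X; rewrite !ham_cmp. Qed.

Lemma muT_cmp (R : realFieldType) d (f : cube d -> R) (A B : cube d) :
  muT f A B = muT (fun X => f (cmp X)) (cmp A) (cmp B).
Proof. by rewrite /muT (reindex_inj (inv_inj (@cmpK d))) /=; apply: eq_bigl => X; rewrite !ham_cmp. Qed.

Lemma equil0 (R : realFieldType) d (f : cube d -> R) :
  decr f -> equilibrium f (cube0 d) (cube0 d).
Proof.
move=> df.
have V00 : muV f (cube0 d) (cube0 d) = 0 by rewrite /muV big_pred0 // => X; rewrite ltnn.
have T00 : muT f (cube0 d) (cube0 d) = \sum_X f X by rewrite /muT; apply: eq_bigl => X; rewrite eqxx.
split => A; rewrite /P1 /P2 V00 T00 add0r.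
- have := partition f A (cube0 d); have := key A df; lra.
- have := partition f A (cube0 d); have := key A df; rewrite muT_sym; lra.
Qed.

Lemma cmp1 d : cmp (cube1 d) = cube0 d.
Proof. by apply/ffunP => i; rewrite !ffunE. Qed.

Theorem mainTheorem7 (R : realFieldType) (d : nat) (mu : cube d -> R) :
  is_distribution mu ->
  ((forall X Y : cube d, subcube X Y -> mu Y <= mu X) ->
     equilibrium mu (cube0 d) (cube0 d)) /\
  ((forall X Y : cube d, subcube X Y -> mu X <= mu Y) ->
     equilibrium mu (cube1 d) (cube1 d)).
Proof.
move=> _; split; first exact: equil0.
move=> inc.
have dg : decr (fun X => mu (cmp X)).
  move=> X Y /forallP H; apply: inc; apply/forallP => i; rewrite !ffunE.
  by have := H i; case: (X i); case: (Y i).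
have [E1 E2] := equil0 dg.
have P1c : forall A B, P1 mu A B = P1 (fun X => mu (cmp X)) (cmp A) (cmp B).
  by move=> A B; rewrite /P1 muV_cmp muT_cmp.
have P2c : forall A B, P2 mu A B = P2 (fun X => mu (cmp X)) (cmp A) (cmp B).
  by move=> A B; rewrite /P2 muV_cmp muT_cmp.
split => A; [rewrite !P1c | rewrite !P2c]; rewrite cmp1.
- exact: E1.
- exact: E2.
Qed.
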